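(* Let $K$ be an infinite field of characteristic $p>0$, let $\lambda=(\lambda_1,\dots,\lambda_n)$ and $\mu=(\mu_1,\dots,\mu_n)$ be partitions of $r$ with $\mu_2\le\lambda_1$, let $k,d$ be positive integers, and let $\mu^+=(\mu_1+kp^d,\mu_2,\dots,\mu_n)$. Let $c_U\in K$ for $U\in A$. Then \[\sum_{U\in A}c_U[U]=0 \text{ in } \Delta(\mu)\iff\sum_{U\in A}c_U[U^+]=0 \text{ in } \Delta(\mu^+).\]
   Context: $V=K^n$ with basis $e_1<\dots<e_n$, written $1,\dots,n$; $D(\nu)=D_{\nu_1}V\otimes\cdots\otimes D_{\nu_n}V$ (divided powers), $i^{(a)}$ the $a$-th divided power of $e_i$. $\Delta(\nu)$ is the Weyl module of the Schur algebra $S_K(n,|\nu|)$, with the Akin–Buchsbaum–Weyman surjection $d'_\nu:D(\nu)\to\Delta(\nu)$. A tableau of shape $\nu$ is a filling of the Young diagram of $\nu$ by entries in $\{1,\dots,n\}$. For a tableau $T$, $x_T=x_T(1)\otimes\cdots\otimes x_T(n)\in D(\nu)$ where $x_T(i)=1^{(a_{i1})}\cdots n^{(a_{in})}$ with $a_{ij}$ the number of $j$'s in row $i$, and $[T]=d'_\nu(x_T)$. For a tableau $T$ of shape $\mu$, $T^+$ is the tableau of shape $\mu^+$ obtained by inserting $kp^d$ entries $1$ at the start of the top row. $A$ is the set of tableaux of shape $\mu$ whose row $i$ (for each $i$) contains only entries $\ge i$ and whose first row contains exactly $\lambda_1+t$ entries equal to $1$ for some $0\le t\le\lambda_2$. 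*)

(* Defs.v *)
From mathcomp Require Import all_boot all_order all_algebra.
Set Implicit Arguments. Unset Strict Implicit. Unset Printing Implicit Defensive.
Import GRing.Theory.
Local Open Scope ring_scope.

(* Conventions: V = K^n with basis e_1 < ... < e_n, written 1..n (entries are
   nats in [1, n]).  A tableau (filling) of shape nu is a [seq (seq nat)]
   whose i-th row has size nu_i (rows are 1-based in the paper, 0-based here). *)

Definition tableau := seq (seq nat).

Definition is_partition (n r : nat) (nu : seq nat) : bool :=
  [&& size nu == n, sorted geq nu & sumn nu == r]%N.

Definition shape (T : tableau) : seq nat := map size T.

Fixpoint words (n m : nat) : seq (seq nat) :=
  if m is m'.+1 then [seq a :: w | a <- iota 1 n, w <- words n m'] else [:: [::]].

Definition tabs (n : nat) (nu : seq nat) : seq tableau :=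
  foldr (fun m acc => [seq w :: T | w <- words n m, T <- acc]) [:: [::]] nu.

(* ---- The ABW map d'_nu : D(nu) -> Lambda(nu~) = (x)_j Lambda^{nu~_j} V ----
   d'_nu comultiplies each D_{nu_i} V into V^{(x) nu_i} (a monomial
   1^(a_1)...n^(a_n) goes to the sum, with coefficient 1, of all DISTINCT
   words with that content), places the word of row i along row i of the
   diagram, and multiplies each column into the exterior power.  Elements of
   (x)_j Lambda^{nu~_j} V are described by their coordinates in the basis
   e_{S_1} (x) ... (x) e_{S_{nu_1}}, S_j strictly increasing sequences
   (e_S = e_{s_1} /\ ... /\ e_{s_k}). *)

Definition rowarr (T : tableau) : seq tableau :=
  foldr (fun row acc => [seq w :: T' | w <- permutations row, T' <- acc]) [:: [::]] T.

Definition column (T : tableau) (j : nat) : seq nat :=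
  [seq nth 0%N row j | row <- T & (j < size row)%N].

Definition inversions (w : seq nat) : nat :=
  (\sum_(i < size w) \sum_(j < size w | (i < j)%N) (nth 0 w j < nth 0 w i))%N.

(* coordinate of e_{w_1} /\ ... /\ e_{w_k} on the basis vector e_S *)
Definition wedge_coord (K : fieldType) (w S : seq nat) : K :=
  if sorted ltn S && perm_eq w S then (-1) ^+ inversions w else 0.

(* coordinate of [T] = d'_nu(x_T) on the basis vector indexed by Ss *)
Definition bracket_coord (K : fieldType) (T : tableau) (Ss : seq (seq nat)) : K :=
  \sum_(T' <- rowarr T)
     \prod_(j < size (head [::] T)) wedge_coord K (column T' j) (nth [::] Ss j).

(* sum_{(c, T) in F} c [T] = 0 in Delta(nu) (= image of d'_nu) *)
Definition weyl_comb_eq0 (K : fieldType) (F : seq (K * tableau)) : Prop :=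
  forall Ss : seq (seq nat),
    \sum_(cT <- F) cT.1 * bracket_coord K cT.2 Ss = 0.

Definition part_plus (m : nat) (mu : seq nat) : seq nat :=
  if mu is a :: s then (a + m)%N :: s else [::].

Definition tab_plus (m : nat) (T : tableau) : tableau :=
  if T is row :: T' then (nseq m 1%N ++ row) :: T' else [::].

Definition setA (n : nat) (la mu : seq nat) : seq tableau :=
  [seq U <- tabs n mu |
    all (fun i => all (fun e => i.+1 <= e) (nth [::] U i)) (iota 0 n)
    && (nth 0 la 0 <= count_mem 1%N (head [::] U) <= nth 0 la 0 + nth 0 la 1)]%N.

(* Main.v *)
Require Import Defs.
From mathcomp Require Import all_boot all_order all_algebra.
From mathcomp Require Import zify.
From Stdlib Require Import Classical.
Set Implicit Arguments. Unset Strict Implicit. Unset Printing Implicit Defensive.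
Import GRing.Theory.
Local Open Scope ring_scope.

Definition sg (x : nat) : seq nat := [:: x].

Definition tl (Ss : seq (seq nat)) (q len : nat) : seq (seq nat) :=
  map (fun j => nth [::] Ss j) (iota q len).

Definition Gf (K : fieldType) (R : tableau) (Ss : seq (seq nat)) (q : nat) (h : seq nat) : K :=
  \sum_(T' <- rowarr R) \prod_(0 <= j < q) wedge_coord K (nth 0%N h j :: column T' j) (nth [::] Ss j).

Lemma inversions1 x : inversions [:: x] = 0%N.
Proof.
rewrite /inversions; apply big1 => i _; apply big1 => j.
by rewrite (ord1 i) (ord1 j).
Qed.

Lemma wedge1 (K : fieldType) x S : wedge_coord K [:: x] S = (S == [:: x])%:R.
Proof.
rewrite /wedge_coord; have [->|ne] := eqVneq S [:: x].
  by rewrite perm_refl /= inversions1 expr0.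
case: ifP => // /andP[_ hp]; case/negP: ne; apply/eqP.
by apply: perm_small_eq => //; rewrite perm_sym.
Qed.

Lemma rowarr_shape R T : T \in rowarr R -> map size T = map size R.
Proof.
elim: R T => [|row R IH] T /=; first by rewrite inE => /eqP ->.
case/allpairsPdep => w [T' [hw hT ->]] /=.
by rewrite (IH _ hT) (perm_size (_ : perm_eq w row)) // -mem_permutations.
Qed.

Lemma words_size n m w : w \in words n m -> size w = m.
Proof.
elim: m w => [|m IH] w /=; first by rewrite inE => /eqP ->.
by case/allpairsPdep => a [w' [_ hw ->]] /=; rewrite (IH _ hw).
Qed.

Lemma tabs_shape n nu T : T \in tabs n nu -> map size T = nu.
Proof.
elim: nu T => [|m nu IH] T /=; first by rewrite inE => /eqP ->.
case/allpairsPdep => w [T' [hw hT ->]] /=.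
by rewrite (IH _ hT) (words_size hw).
Qed.

Lemma drop_iota (w : seq nat) q : drop q w = map (nth 0%N w) (iota q (size w - q)).
Proof.
apply: (@eq_from_nth _ 0%N); first by rewrite size_drop size_map size_iota.
move=> i; rewrite size_drop => hi.
by rewrite nth_drop (nth_map 0%N) ?size_iota // nth_iota.
Qed.

Lemma prod_ind (K : fieldType) (s : seq nat) (f g : nat -> seq nat) :
  \prod_(j <- s) ((f j == g j)%:R : K) = (map f s == map g s)%:R.
Proof.
elim: s => [|a s IH]; first by rewrite big_nil.
by rewrite big_cons IH /= eqseq_cons; case: (f a == g a); rewrite ?mul1r ?mul0r.
Qed.

Lemma decomp (K : fieldType) row R Ss q :
  (q <= size row)%N -> all (fun r => size r <= q)%N R ->
  bracket_coord K (row :: R) Ss =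
  \sum_(w <- permutations row)
     (tl Ss q (size row - q) == map sg (drop q w))%:R * Gf K R Ss q (take q w).
Proof.
move=> hq hR; rewrite /bracket_coord /= big_allpairs_dep.
apply: eq_big_seq => w; rewrite mem_permutations => /perm_size hw.
rewrite /Gf mulr_sumr; apply: eq_big_seq => T' hT'.
have hT'R : all (fun r => size r <= q)%N T'.
  move: hR; rewrite -(all_map size (fun s => s <= q)%N) -(rowarr_shape hT').
  by rewrite all_map.
rewrite -(big_mkord xpredT (fun j => wedge_coord K (column (w :: T') j) (nth [::] Ss j))).
rewrite (@big_cat_nat _ _ _ q 0 (size row) _ _ (leq0n q) hq) mulrC; congr (_ * _).
  apply: eq_big_nat => j /andP[_ hj].
  rewrite /column /= hw (leq_trans hj hq) nth_take //.
rewrite /index_iota.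
transitivity (\prod_(j <- iota q (size row - q)) ((nth [::] Ss j == sg (nth 0%N w j))%:R : K)).
  apply: eq_big_seq => j; rewrite mem_iota => /andP[hj1 hj2].
  have hjr : (j < size row)%N by lia.
  have -> : column (w :: T') j = [:: nth 0%N w j].
    rewrite /column /= hw hjr /=; congr (_ :: _).
    suff -> : [seq row0 <- T' | (j < size row0)%N] = [::] by [].
    apply/eqP; rewrite -(negbK (_ == _)) -has_filter; apply/hasPn => r hr.
    by have := allP hT'R r hr; rewrite -leqNgt => /leq_trans; apply.
  by rewrite wedge1.
rewrite prod_ind /tl; congr ((_ == _)%:R).
by rewrite drop_iota -map_comp hw.
Qed.

Lemma key_some (K : fieldType) (F : seq nat -> K) row r' v q :
  perm_eq row (r' ++ v) -> size r' = q ->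
  \sum_(w <- permutations row | drop q w == v) F (take q w) =
  \sum_(h <- permutations r') F h.
Proof.
move=> hp hs; rewrite -big_filter.
transitivity (\sum_(w <- [seq h ++ v | h <- permutations r']) F (take q w)); last first.
  rewrite big_map; apply: eq_big_seq => h; rewrite mem_permutations => /perm_size hh.
  by rewrite take_size_cat // hh.
apply: perm_big; apply: uniq_perm.
- by rewrite filter_uniq // permutations_uniq.
- rewrite map_inj_in_uniq ?permutations_uniq // => h1 h2.
  rewrite !mem_permutations => /perm_size e1 /perm_size e2 /eqP.
  by rewrite eqseq_cat ?e1 ?e2 // => /andP[/eqP].
move=> w; rewrite mem_filter mem_permutations; apply/andP/mapP.
  case=> /eqP hd hw; exists (take q w); last by rewrite -{1}(cat_take_drop q w) hd.
  rewrite mem_permutations -(perm_cat2r v) -{1}hd cat_take_drop.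
  by apply: perm_trans hw hp.
case=> h; rewrite mem_permutations => hh ->; split.
  by rewrite -hs -(perm_size hh) drop_size_cat.
by rewrite perm_sym (perm_trans hp) // perm_cat2r perm_sym.
Qed.

Lemma key_none (K : fieldType) (F : seq nat -> K) row v q :
  (forall r', ~ perm_eq row (r' ++ v)) ->
  \sum_(w <- permutations row | drop q w == v) F (take q w) = 0.
Proof.
move=> hn; apply: big1_seq => w /andP[/eqP hd]; rewrite mem_permutations => hw.
exfalso; apply: (hn (take q w)); by rewrite -hd cat_take_drop perm_sym.
Qed.

Lemma coord_tail (K : fieldType) row R Ss q v :
  (q <= size row)%N -> all (fun r => size r <= q)%N R ->
  tl Ss q (size row - q) = map sg v ->
  bracket_coord K (row :: R) Ss =
  \sum_(w <- permutations row | drop q w == v) Gf K R Ss q (take q w).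
Proof.
move=> hq hR hv; rewrite (decomp _ _ hq hR) hv [RHS]big_mkcond; apply: eq_bigr => w _.
have inj : injective sg by move=> a b [].
rewrite (inj_eq (inj_map inj)) eq_sym; case: (drop q w == v).
  by rewrite mul1r. by rewrite mul0r.
Qed.

Lemma coord_notail (K : fieldType) row R Ss q :
  (q <= size row)%N -> all (fun r => size r <= q)%N R ->
  (forall v, tl Ss q (size row - q) <> map sg v) ->
  bracket_coord K (row :: R) Ss = 0.
Proof.
move=> hq hR hn; rewrite (decomp _ _ hq hR); apply: big1 => w _.
case: eqP => [h|_]; first by case: (hn _ h).
by rewrite mul0r.
Qed.

Lemma Gf_eq (K : fieldType) R Ss Ss' q h :
  (forall j, (j < q)%N -> nth [::] Ss j = nth [::] Ss' j) ->
  Gf K R Ss q h = Gf K R Ss' q h.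
Proof.
move=> e; rewrite /Gf; apply: eq_bigr => T' _; apply: eq_big_nat => j /andP[_ hj].
by rewrite e.
Qed.

Lemma coord_plus (K : fieldType) row R Ss Ss' q m v v' :
  (q <= size row)%N -> all (fun r => size r <= q)%N R ->
  (forall j, (j < q)%N -> nth [::] Ss j = nth [::] Ss' j) ->
  tl Ss q (size row - q) = map sg v ->
  tl Ss' q (m + size row - q) = map sg v' ->
  perm_eq v' (nseq m 1%N ++ v) ->
  bracket_coord K (row :: R) Ss = bracket_coord K ((nseq m 1%N ++ row) :: R) Ss'.
Proof.
move=> hq hR e hv hv' hp.
have hq' : (q <= size (nseq m 1%N ++ row))%N by rewrite size_cat; lia.
rewrite (@coord_tail K row R Ss q v hq hR hv) (@coord_tail K _ R Ss' q v' hq' hR); last by rewrite size_cat size_nseq.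
have -> : \sum_(w <- permutations (nseq m 1%N ++ row) | drop q w == v') Gf K R Ss' q (take q w)
  = \sum_(w <- permutations (nseq m 1%N ++ row) | drop q w == v') Gf K R Ss q (take q w).
  by apply: eq_bigr => w _; rewrite (Gf_eq _ _ _ e).
case: (classic (exists r', perm_eq row (r' ++ v))) => [[r' hr]|hn].
  have hs : size r' = q.
    have := congr1 size hv; rewrite /tl size_map size_iota size_map => h1.
    have := perm_size hr; rewrite size_cat => h2; rewrite h2 in h1 hq.
    have h3 : forall a b c : nat, (a + b - c = b)%N -> (c <= a + b)%N -> a = c by move=> *; lia.
    exact: h3 _ _ _ h1 hq.
  rewrite (key_some _ hr hs) (@key_some K _ (nseq m 1%N ++ row) r' v' q) //.
  apply: (perm_trans (_ : perm_eq _ (nseq m 1%N ++ r' ++ v))); first by rewrite perm_cat2l.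
  by rewrite perm_catCA perm_cat2l perm_sym.
have hn' : forall r', ~ perm_eq row (r' ++ v) by move=> r' h; apply: hn; exists r'.
rewrite (key_none _ _ hn') key_none // => r' hr; apply: (hn' r').
rewrite -(perm_cat2l (nseq m 1%N)); apply: (perm_trans hr).
by rewrite perm_sym perm_catCA perm_cat2l perm_sym.
Qed.

Lemma coord_zero_ones (K : fieldType) (F : seq nat -> K) row q m v' :
  (q <= count_mem 1%N row)%N -> (count_mem 1%N v' < m)%N ->
  \sum_(w <- permutations (nseq m 1%N ++ row) | drop q w == v') F (take q w) = 0.
Proof.
move=> h1 h2; apply: big1_seq => w /andP[/eqP hd]; rewrite mem_permutations => /permP hw.
exfalso; have := hw (pred1 1%N); rewrite count_cat count_nseq /= mul1n.
rewrite -(cat_take_drop q w) count_cat hd.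
have := count_size (pred1 1%N) (take q w); rewrite size_take_min => H1 H3.
have hh : forall x y t u : nat, (x <= minn q u)%N -> (y < m)%N -> (q <= t)%N ->
  (x + y = m + t)%N -> False by move=> *; lia.
exact: hh _ _ _ _ H1 h2 h1 H3.
Qed.

Lemma geq_tr : transitive geq.
Proof. by move=> y x z /= h1 h2; apply: leq_trans h2 h1. Qed.

Lemma setA_prop n r la mu U : (0 < n)%N -> is_partition n r mu -> U \in setA n la mu ->
  exists row R, [/\ U = row :: R, size row = nth 0%N mu 0,
    all (fun r => size r <= nth 0%N mu 1)%N R, (nth 0%N mu 1 <= nth 0%N mu 0)%N
    & (nth 0%N la 0 <= count_mem 1%N row)%N].
Proof.
move=> n0 /and3P[/eqP sz srt _]; rewrite mem_filter => /andP[/andP[_ /andP[hc _]] hU].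
have sh := tabs_shape hU; clear hU.
case: U sh hc => [|row R] sh hc.
  by move: n0; rewrite -sz -sh.
rewrite -sh /= in srt hc *; exists row, R; split => //.
- case: R srt {sh} => [|b s] //= /andP[_ srt].
  rewrite leqnn /=; have := order_path_min geq_tr srt.
  by rewrite all_map.
- by case: R srt {sh} => [|b s] //= /andP[].
Qed.

Lemma tl_build (S0 : seq (seq nat)) q v :
  tl (mkseq (fun j => nth [::] S0 j) q ++ map sg v) q (size v) = map sg v.
Proof.
apply: (@eq_from_nth _ [::]); first by rewrite /tl !size_map size_iota.
move=> i; rewrite /tl size_map size_iota => hi.
rewrite (nth_map 0%N) ?size_iota // nth_iota // nth_cat size_mkseq.
by rewrite ltnNge leq_addr /= addKn.
Qed.

Lemma nth_build (S0 : seq (seq nat)) q v j : (j < q)%N ->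
  nth [::] (mkseq (fun j => nth [::] S0 j) q ++ map sg v) j = nth [::] S0 j.
Proof. by move=> hj; rewrite nth_cat size_mkseq hj nth_mkseq. Qed.

Lemma perm_split (v' : seq nat) m : (m <= count_mem 1%N v')%N ->
  perm_eq v' (nseq m 1%N ++ ([seq x <- v' | predC (pred1 1%N) x] ++ nseq (count_mem 1%N v' - m) 1%N)).
Proof.
move=> hm; rewrite perm_sym perm_catCA -nseqD subnKC // perm_catC.
have -> : nseq (count_mem 1%N v') 1%N = [seq x <- v' | pred1 1%N x].
  rewrite -size_filter; symmetry; apply/all_pred1P; exact: filter_all.
by rewrite perm_filterC.
Qed.

Unset Implicit Arguments.
Set Strict Implicit.

Theorem corollary4p5 (K : fieldType) (p n r : nat) (la mu : seq nat) (k d : nat)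
    (c : tableau -> K) :
  p \in [pchar K] ->
  (forall s : seq K, exists x : K, x \notin s) ->
  (0 < n)%N ->
  is_partition n r la -> is_partition n r mu ->
  (nth 0 mu 1 <= nth 0 la 0)%N ->
  (0 < k)%N -> (0 < d)%N ->
  (weyl_comb_eq0 [seq (c U, U) | U <- setA n la mu]
   <-> weyl_comb_eq0 [seq (c U, tab_plus (k * p ^ d) U) | U <- setA n la mu]).
Proof.
move=> _ _ n0 _ hmu hq _ _.
set m := (k * p ^ d)%N; set q := nth 0%N mu 1; set L := nth 0%N mu 0.
have P := fun U => @setA_prop n r la mu U n0 hmu.
split => H Ss; rewrite big_map /=.
- case: (classic (exists v', tl Ss q (m + L - q) = map sg v')) => [[v' hv']|hn]; last first.
    apply: big1_seq => U /andP[_ /P [row [R [-> hs hR hqL _]]]] /=.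
    rewrite (@coord_notail K _ R Ss q); first by rewrite mulr0.
    + by rewrite size_cat size_nseq hs (leq_trans hqL) // leq_addl.
    + by [].
    + by move=> v; rewrite size_cat size_nseq hs => e; apply: hn; exists v.
  case: (ltnP (count_mem 1%N v') m) => hc.
    apply: big1_seq => U /andP[_ /P [row [R [-> hs hR hqL hones]]]] /=.
    have hq' : (q <= size (nseq m 1%N ++ row))%N by rewrite size_cat size_nseq hs (leq_trans hqL) // leq_addl.
    rewrite (@coord_tail K _ R Ss q v' hq' hR); last by rewrite size_cat size_nseq hs.
    rewrite coord_zero_ones ?mulr0 //; exact: leq_trans hq hones.
  set v := [seq x <- v' | predC (pred1 1%N) x] ++ nseq (count_mem 1%N v' - m) 1%N.
  have hp := perm_split hc.
  have hsv : size v = (L - q)%N.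
    have := congr1 size hv'; rewrite /tl !size_map size_iota => e.
    have := perm_size hp; rewrite size_cat size_nseq -/v -e => e2.
    have h3 : forall a b x : nat, (m + a - b = m + x)%N -> x = (a - b)%N by move=> *; lia.
    exact: h3 _ _ _ e2.
  set S0 := mkseq (fun j => nth [::] Ss j) q ++ map sg v.
  transitivity (\sum_(cT <- [seq (c U, U) | U <- setA n la mu]) cT.1 * bracket_coord K cT.2 S0);
    last exact: H S0.
  rewrite big_map.
  apply: eq_big_seq => U /P [row [R [-> hs hR hqL _]]] /=; congr (_ * _); symmetry.
  apply: (@coord_plus K row R S0 Ss q m v v') => //.
  + by rewrite hs.
  + by move=> j hj; rewrite nth_build.
  + by rewrite hs -hsv tl_build.
  + by rewrite hs.
- case: (classic (exists v, tl Ss q (L - q) = map sg v)) => [[v hv]|hn]; last first.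
    apply: big1_seq => U /andP[_ /P [row [R [-> hs hR hqL _]]]] /=.
    rewrite (@coord_notail K _ R Ss q); first by rewrite mulr0.
    + by rewrite hs.
    + by [].
    + by move=> v; rewrite hs => e; apply: hn; exists v.
  have hsv : size v = (L - q)%N.
    by have := congr1 size hv; rewrite /tl !size_map size_iota.
  set S1 := mkseq (fun j => nth [::] Ss j) q ++ map sg (nseq m 1%N ++ v).
  transitivity (\sum_(cT <- [seq (c U, tab_plus m U) | U <- setA n la mu]) cT.1 * bracket_coord K cT.2 S1);
    last exact: H S1.
  rewrite big_map.
  apply: eq_big_seq => U /P [row [R [-> hs hR hqL _]]] /=; congr (_ * _).
  apply: (@coord_plus K row R Ss S1 q m v (nseq m 1%N ++ v)) => //.
  + by rewrite hs.
  + by move=> j hj; rewrite nth_build.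
  + by rewrite hs.
  + have -> : (m + size row - q = size (nseq m 1%N ++ v))%N.
      by rewrite size_cat size_nseq hsv hs; lia.
    by rewrite tl_build.
Qed.
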